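(* For BQAP1 and for BQAP2 (with $m,n\ge2$), the objective function value of a solution that is locally optimal with respect to the swap neighborhood and the concurrent swap neighborhood can be arbitrarily bad and can be worse than the average $\mathcal{A}_1(Q,c,d)$ (resp. $\mathcal{A}_2(Q,c,d)$): for every $K>0$ there is an instance and a feasible solution that is locally optimal for both neighborhoods whose objective value exceeds the optimal value by more than $K$ and is strictly greater than the average of the objective value over all feasible solutions.
   Context: $M=\{1,\dots,m\}$, $N=\{1,\dots,n\}$. BQAP1 (minimization): data $Q=(q_{ijk\ell})$ ($m\times n\times m\times n$ real array), real $m\times n$ matrices $c,d$; feasible solutions are pairs $(x,y)$ of $m\times n$ 0-1 matrices with $\sum_{j} x_{ij}=1$ for all $i\in M$ and $\sum_{i} y_{ij}=1$ for all $j\in N$; objective $f_1(x,y)=\sum_{i,k\in M}\sum_{j,\ell\in N} q_{ijk\ell}x_{ij}y_{k\ell}+\sum c_{ij}x_{ij}+\sum d_{ij}y_{ij}$. BQAP2 (minimization): data $Q$ ($m\times m\times n\times n$), $m\times m$ matrix $c$, $n\times n$ matrix $d$; feasible $(x,y)$: $x$ is $m\times m$ 0-1 with unit row sums, $y$ is $n\times n$ 0-1 with unit column sums; objective $f_2(x,y)=\sum_{i,j\in M}\sum_{k,\ell\in N} q_{ijk\ell}x_{ij}y_{k\ell}+\sum c_{ij}x_{ij}+\sum d_{ij}y_{ij}$. $\mathcal{A}_1,\mathcal{A}_2$ are the averages of the objective over all feasible solutions. For a feasible $(x,y)$, $swapx(i,j)$ produces $(x',y)$ where $x'$ agrees with $x$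 except that row $i$ is replaced by the unit vector with its 1 in column $j$; $swapy(i,j)$ produces $(x,y')$ where $y'$ agrees with $y$ except column $j$ is replaced by the unit vector with its 1 in row $i$. The swap neighborhood of $(x,y)$ consists of all solutions obtained by one $swapx(i,j)$ or one $swapy(i,j)$. The concurrent swap neighborhood consists of all solutions $(x',y)$ with $x'$ any feasible $x$-matrix (obtained by applying swaps on $x$ in distinct rows) and all solutions $(x,y')$ with $y'$ any feasible $y$-matrix. A solution is locally optimal for a neighborhood if no solution in its neighborhood has strictly smaller objective value. *)

(* Defs.v *)
From HB Require Import structures.
From mathcomp Require Import all_boot all_order all_algebra.
Set Implicit Arguments. Unset Strict Implicit. Unset Printing Implicit Defensive.
Import Order.TTheory GRing.Theory Num.Theory.
Local Open Scope ring_scope.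

Section BQAP.
Variable R : realFieldType.

(* 0-1 matrices are represented as boolean matrices; b2R converts an entry. *)
Definition b2R (b : bool) : R := (b : nat)%:R.

Definition rowfeas p q (x : 'M[bool]_(p, q)) : bool :=
  [forall i, (\sum_j (x i j : nat) == 1)%N].
Definition colfeas p q (y : 'M[bool]_(p, q)) : bool :=
  [forall j, (\sum_i (y i j : nat) == 1)%N].

Definition swapx p q (x : 'M[bool]_(p, q)) (i : 'I_p) (j : 'I_q) : 'M[bool]_(p, q) :=
  \matrix_(k, l) (if k == i then l == j else x k l).
Definition swapy p q (y : 'M[bool]_(p, q)) (i : 'I_p) (j : 'I_q) : 'M[bool]_(p, q) :=
  \matrix_(k, l) (if l == j then k == i else y k l).

Section Generic.
Variables (p q r s : nat).
Notation XT := 'M[bool]_(p, q).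
Notation YT := 'M[bool]_(r, s).

Definition feasible (x : XT) (y : YT) : bool := rowfeas x && colfeas y.

Definition swap_nbhd (x : XT) (y : YT) (x' : XT) (y' : YT) : Prop :=
  (y' = y /\ exists i j, x' = swapx x i j) \/
  (x' = x /\ exists i j, y' = swapy y i j).

Definition concurrent_swap_nbhd (x : XT) (y : YT) (x' : XT) (y' : YT) : Prop :=
  (y' = y /\ rowfeas x') \/ (x' = x /\ colfeas y').

Definition locally_optimal (N : XT -> YT -> XT -> YT -> Prop)
  (f : XT -> YT -> R) (x : XT) (y : YT) : Prop :=
  forall x' y', N x y x' y' -> ~ (f x' y' < f x y).

Definition average (f : XT -> YT -> R) : R :=
  (\sum_(pr : XT * YT | feasible pr.1 pr.2) f pr.1 pr.2) /
  (#|[pred pr : XT * YT | feasible pr.1 pr.2]|)%:R.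

Definition bad_local_optimum (f : XT -> YT -> R) (K : R) (x : XT) (y : YT) : Prop :=
  [/\ feasible x y,
      locally_optimal swap_nbhd f x y,
      locally_optimal concurrent_swap_nbhd f x y,
      (exists xs ys, [/\ feasible xs ys,
                         (forall x' y', feasible x' y' -> f xs ys <= f x' y') &
                         f xs ys + K < f x y])
    & average f < f x y].
End Generic.

Definition f1 m n (Q : 'I_m -> 'I_n -> 'I_m -> 'I_n -> R) (c d : 'M[R]_(m, n))
  (x y : 'M[bool]_(m, n)) : R :=
  \sum_(i < m) \sum_(k < m) \sum_(j < n) \sum_(l < n)
      Q i j k l * b2R (x i j) * b2R (y k l)
  + \sum_(i < m) \sum_(j < n) c i j * b2R (x i j)
  + \sum_(i < m) \sum_(j < n) d i j * b2R (y i j).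

Definition f2 m n (Q : 'I_m -> 'I_m -> 'I_n -> 'I_n -> R) (c : 'M[R]_m) (d : 'M[R]_n)
  (x : 'M[bool]_m) (y : 'M[bool]_n) : R :=
  \sum_(i < m) \sum_(j < m) \sum_(k < n) \sum_(l < n)
      Q i j k l * b2R (x i j) * b2R (y k l)
  + \sum_(i < m) \sum_(j < m) c i j * b2R (x i j)
  + \sum_(i < n) \sum_(j < n) d i j * b2R (y i j).

End BQAP.

(* Main.v *)
Require Import Defs.
From HB Require Import structures.
From mathcomp Require Import all_boot all_order all_algebra.
From mathcomp Require Import ring.
Import Order.TTheory GRing.Theory Num.Theory.
Local Open Scope ring_scope.

Section Aux.
Variable R : realFieldType.

Lemma sum0 p (F : 'I_p.+1 -> R) : (forall i, i != ord0 -> F i = 0) ->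
  \sum_i F i = F ord0.
Proof. by move=> H; rewrite (bigD1 ord0) //= big1 ?addr0. Qed.

Lemma sumnat_delta p (a : 'I_p) : (\sum_j ((j == a) : nat) = 1)%N.
Proof. by rewrite (bigD1 a) //= eqxx big1 // => j /negPf->. Qed.

Lemma rowfeas_c p q (a : 'I_q) : rowfeas (\matrix_(i < p, j < q) (j == a)).
Proof.
apply/forallP => i; under eq_bigr do rewrite mxE.
by rewrite sumnat_delta.
Qed.

Lemma colfeas_r p q (a : 'I_p) : colfeas (\matrix_(i < p, j < q) (i == a)).
Proof.
apply/forallP => j; under eq_bigr do rewrite mxE.
by rewrite sumnat_delta.
Qed.

Lemma avg_lt p q r s (f : 'M[bool]_(p, q) -> 'M[bool]_(r, s) -> R) M xs ys :
  feasible xs ys -> f xs ys < M -> (forall x y, f x y <= M) -> average f < M.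
Proof.
move=> Hf Hlt Hle; rewrite /average.
set P := [pred pr : 'M[bool]_(p, q) * 'M[bool]_(r, s) | feasible pr.1 pr.2].
have HN : (0 < #|P|)%N by apply/card_gt0P; exists (xs, ys).
rewrite ltr_pdivrMr ?ltr0n //.
rewrite -subr_lt0.
have -> : M * (#|P|)%:R = \sum_(pr : 'M[bool]_(p, q) * 'M[bool]_(r, s) | feasible pr.1 pr.2) M.
  by rewrite (@sumr_const _ _ P) mulr_natr.
rewrite -sumrB (bigD1 (xs, ys)) //=.
apply: (@le_lt_trans _ _ (f xs ys - M)).
  rewrite -[X in _ <= X]addr0 lerD2l; apply: sumr_le0 => pr _.
  by rewrite subr_le0.
by rewrite subr_lt0.
Qed.

Definition g (a b : bool) : R := if a || b then 1 else 0.

Lemma b2R0 b : (b = false) -> b2R R b = 0. Proof. by move->. Qed.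

Section F1.
Variables (m n : nat) (M : R).
Definition Q1 (i : 'I_m.+1) (j : 'I_n.+1) (k : 'I_m.+1) (l : 'I_n.+1) : R :=
  if [&& i == ord0, j == ord0, k == ord0 & l == ord0] then -M else 0.
Definition C1 : 'M[R]_(m.+1, n.+1) :=
  \matrix_(i, j) if (i == ord0) && (j == ord0) then M else 0.

Lemma lin1 (x : 'M[bool]_(m.+1, n.+1)) :
  \sum_i \sum_j C1 i j * b2R R (x i j) = M * b2R R (x ord0 ord0).
Proof.
rewrite sum0 => [|i Hi]; last first.
  by apply: big1 => j _; rewrite mxE (negPf Hi) mul0r.
rewrite sum0 => [|j Hj]; last by rewrite mxE (negPf Hj) andbF mul0r.
by rewrite mxE.
Qed.

Lemma f1E (x y : 'M[bool]_(m.+1, n.+1)) :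
  f1 Q1 C1 C1 x y = M * g (x ord0 ord0) (y ord0 ord0).
Proof.
rewrite /f1 !lin1.
rewrite sum0 => [|i Hi]; last first.
  by apply: big1 => k _; apply: big1 => j _; apply: big1 => l _;
     rewrite /Q1 (negPf Hi) /= !mul0r.
rewrite sum0 => [|k Hk]; last first.
  by apply: big1 => j _; apply: big1 => l _;
     rewrite /Q1 (negPf Hk) !(andbF, andFb) /= !mul0r.
rewrite sum0 => [|j Hj]; last first.
  by apply: big1 => l _; rewrite /Q1 (negPf Hj) !(andbF, andFb) /= !mul0r.
rewrite sum0 => [|l Hl]; last by rewrite /Q1 (negPf Hl) !(andbF, andFb) /= !mul0r.
rewrite /Q1 /g /b2R !eqxx /=.
by case: (x ord0 ord0); case: (y ord0 ord0) => /=; rewrite ?mulr1 ?mulr0 ?mul0r ?mulr1; ring.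
Qed.
End F1.

Section F2.
Variables (m n : nat) (M : R).
Definition Q2 (i j : 'I_m.+1) (k l : 'I_n.+1) : R :=
  if [&& i == ord0, j == ord0, k == ord0 & l == ord0] then -M else 0.

Lemma f2E (x : 'M[bool]_m.+1) (y : 'M[bool]_n.+1) :
  f2 Q2 (C1 m m M) (C1 n n M) x y = M * g (x ord0 ord0) (y ord0 ord0).
Proof.
rewrite /f2 !lin1.
rewrite sum0 => [|i Hi]; last first.
  by apply: big1 => k _; apply: big1 => j _; apply: big1 => l _;
     rewrite /Q2 (negPf Hi) /= !mul0r.
rewrite sum0 => [|k Hk]; last first.
  by apply: big1 => j _; apply: big1 => l _;
     rewrite /Q2 (negPf Hk) !(andbF, andFb) /= !mul0r.
rewrite sum0 => [|j Hj]; last first.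
  by apply: big1 => l _; rewrite /Q2 (negPf Hj) !(andbF, andFb) /= !mul0r.
rewrite sum0 => [|l Hl]; last by rewrite /Q2 (negPf Hl) !(andbF, andFb) /= !mul0r.
rewrite /Q2 /g /b2R !eqxx /=.
by case: (x ord0 ord0); case: (y ord0 ord0) => /=; rewrite ?mulr1 ?mulr0 ?mul0r ?mulr1; ring.
Qed.
End F2.

Lemma g_ge0 a b : 0 <= g a b. Proof. by rewrite /g; case: (a || b). Qed.
Lemma g_le1 a b : g a b <= 1. Proof. by rewrite /g; case: (a || b). Qed.

Lemma bad_generic p q r s (f : 'M[bool]_(p.+2, q.+2) -> 'M[bool]_(r.+2, s.+2) -> R) (K : R) :
  0 < K ->
  (forall x y, f x y = (K + 1) * g (x ord0 ord0) (y ord0 ord0)) ->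
  bad_local_optimum f K (\matrix_(i, j) (j == ord0)) (\matrix_(i, j) (i == ord0)).
Proof.
move=> HK fE.
have HM : 0 < K + 1 by rewrite ltr_wpDr.
have Hval : forall (x : 'M[bool]_(p.+2, q.+2)) (y : 'M[bool]_(r.+2, s.+2)), (x ord0 ord0 || y ord0 ord0) -> f x y = K + 1.
  by move=> x y H; rewrite fE /g H mulr1.
have H00 : f (\matrix_(i, j) (j == ord0)) (\matrix_(i, j) (i == ord0)) = K + 1.
  by apply: Hval; rewrite !mxE eqxx.
have Hle : forall (x : 'M[bool]_(p.+2, q.+2)) (y : 'M[bool]_(r.+2, s.+2)), f x y <= K + 1.
  by move=> x y; rewrite fE -[X in _ <= X]mulr1 ler_wpM2l ?g_le1 // ltW.
have Hge : forall (x : 'M[bool]_(p.+2, q.+2)) (y : 'M[bool]_(r.+2, s.+2)), 0 <= f x y.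
  by move=> x y; rewrite fE mulr_ge0 ?g_ge0 // ltW.
set xs := \matrix_(i < p.+2, j < q.+2) (j == ord_max).
set ys := \matrix_(i < r.+2, j < s.+2) (i == ord_max).
have Fs : feasible xs ys by rewrite /feasible rowfeas_c colfeas_r.
have fs : f xs ys = 0 by rewrite fE !mxE /g /= mulr0.
split.
- by rewrite /feasible rowfeas_c colfeas_r.
- move=> x' y' [[-> _]|[-> _]]; rewrite H00 Hval ?ltxx // !mxE eqxx ?orbT //.
- move=> x' y' [[-> _]|[-> _]]; rewrite H00 Hval ?ltxx // !mxE eqxx ?orbT //.
- exists xs, ys; split => //.
    by move=> x' y' _; rewrite fs Hge.
  by rewrite fs H00 add0r ltrDl ltr01.
- rewrite H00; apply: (@avg_lt _ _ _ _ f (K + 1) xs ys Fs) => //; by rewrite fs.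
Qed.
End Aux.

Theorem theorem5 :
  (forall (R : realFieldType) (m n : nat), (2 <= m)%N -> (2 <= n)%N ->
    forall K : R, 0 < K ->
    exists (Q : 'I_m -> 'I_n -> 'I_m -> 'I_n -> R) (c d : 'M[R]_(m, n))
           (x y : 'M[bool]_(m, n)),
      bad_local_optimum (f1 Q c d) K x y)
  /\
  (forall (R : realFieldType) (m n : nat), (2 <= m)%N -> (2 <= n)%N ->
    forall K : R, 0 < K ->
    exists (Q : 'I_m -> 'I_m -> 'I_n -> 'I_n -> R) (c : 'M[R]_m) (d : 'M[R]_n)
           (x : 'M[bool]_m) (y : 'M[bool]_n),
      bad_local_optimum (f2 Q c d) K x y).
Proof.
split.
- move=> R [|[|m]] // [|[|n]] // _ _ K HK.
  exists (@Q1 R m.+1 n.+1 (K + 1)), (@C1 R m.+1 n.+1 (K + 1)), (@C1 R m.+1 n.+1 (K + 1)).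
  do 2 eexists; apply: bad_generic => // x y; exact: f1E.
- move=> R [|[|m]] // [|[|n]] // _ _ K HK.
  exists (@Q2 R m.+1 n.+1 (K + 1)), (@C1 R m.+1 m.+1 (K + 1)), (@C1 R n.+1 n.+1 (K + 1)).
  do 2 eexists; apply: bad_generic => // x y; exact: f2E.
Qed.
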